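(* Let $1\le k\le n-1$. The complex $\Delta^{NC}_{k,n}$ has the following properties. (i) The map $i\mapsto n+1-i$ on $[n]$ induces (by acting on $k$-subsets) an automorphism of $\Delta^{NC}_{k,n}$. (ii) The map $I\mapsto [n]\setminus I$ (viewing vectors as subsets) induces an isomorphism $\Delta^{NC}_{k,n}\to\Delta^{NC}_{n-k,n}$; i.e. $I,J\in V_{k,n}$ are noncrossing iff $[n]\setminus I$, $[n]\setminus J\in V_{n-k,n}$ are noncrossing. (iii) For $I\ne J\in V_{k,n}$, let $S=I\triangle J$, $m=|I\setminus J|=|J\setminus I|$, and relabel $S$ order-preservingly as $[2m]$; then $I\setminus J$ and $J\setminus I$ become elements of $V_{m,2m}$, and $I,J$ are noncrossing in $V_{k,n}$ iff these two elements of $V_{m,2m}$ are noncrossing. (iv) For $b\in[n]$, the restriction of $\Delta^{NC}_{k,n}$ to the vertices $I$ with $b\in I$ is isomorphic to $\Delta^{NC}_{k-1,n-1}$, and the restriction to vertices with $b\notin I$ is isomorphic to $\Delta^{NC}_{k,n-1}$ (via deleting $b$ and relabeling $[n]\setminus\{b\}$ order-preservingly as $[n-1]$). (v) For each $c\in[n]$, the vector obtained by sorting the cyclic interval $\{c,c+1,\dots,c+k-1\}$ (entries taken modulo $n$ in $\{1,\dots,n\}$) is noncrossing with every element of $V_{k,n}$; hence these $n$ vectors belong to every maximal face of $\Delta^{NC}_{k,n}$.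
   Context: $[n]=\{1,\dots,n\}$. $V_{k,n}$ denotes the set of integer vectors $I=(i_1,\dots,i_k)$ with $1\le i_1<\dots<i_k\le n$, identified with $k$-subsets of $[n]$. Two arcs $(p<p')$ and $(q<q')$ cross if $p<q<p'<q'$ or $q<p<q'<p'$. Two vectors $I=(i_1,\dots,i_k)$, $J=(j_1,\dots,j_k)\in V_{k,n}$ are noncrossing if for all indices $1\le a<b\le k$ such that $i_\ell=j_\ell$ for all $a<\ell<b$, the arcs $(i_a<i_b)$ and $(j_a<j_b)$ do not cross. The noncrossing complex $\Delta^{NC}_{k,n}$ is the flag simplicial complex with vertex set $V_{k,n}$ whose faces are the sets of pairwise noncrossing vectors. *)

(* Defs.v *)
(* Vectors I = (i_1 < ... < i_k) with entries in [n] = {1..n}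
   are represented as strictly increasing sequences of naturals. *)
From mathcomp Require Import all_boot.
Set Implicit Arguments. Unset Strict Implicit. Unset Printing Implicit Defensive.

Definition Vkn (k n : nat) (I : seq nat) : bool :=
  [&& size I == k, sorted ltn I & all (fun i => 0 < i <= n) I].

Definition arcs_cross (p p' q q' : nat) : bool :=
  ((p < q) && (q < p') && (p' < q')) || ((q < p) && (p < q') && (q' < p')).

(* I, J noncrossing (indices 0-based: entry a of I is nth 0 I a) *)
Definition noncrossing (I J : seq nat) : bool :=
  [forall a : 'I_(size I), forall b : 'I_(size I),
     ((a < b) && [forall l : 'I_(size I),
                    ((a < l) && (l < b)) ==> (nth 0 I l == nth 0 J l)])
     ==> ~~ arcs_cross (nth 0 I a) (nth 0 I b) (nth 0 J a) (nth 0 J b)].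

(* faces of the flag complex Delta^NC_{k,n}: finite sets (given as lists)
   of pairwise noncrossing vectors of V_{k,n} *)
Definition is_face (k n : nat) (F : seq (seq nat)) : bool :=
  all (Vkn k n) F && all (fun I => all (noncrossing I) F) F.

Definition is_max_face (k n : nat) (F : seq (seq nat)) : Prop :=
  is_face k n F /\
  forall G, is_face k n G -> {subset F <= G} -> {subset G <= F}.

Definition complex_iso (V1 : pred (seq nat)) (face1 : seq (seq nat) -> bool)
    (V2 : pred (seq nat)) (face2 : seq (seq nat) -> bool)
    (f : seq nat -> seq nat) : Prop :=
  [/\ forall I, V1 I -> V2 (f I),
      forall I J, V1 I -> V1 J -> f I = f J -> I = J,
      forall J, V2 J -> exists2 I, V1 I & f I = J
    & forall F, all V1 F -> face1 F = face2 (map f F)].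

Definition reflect_vec (n : nat) (I : seq nat) : seq nat :=
  rev (map (fun i => n.+1 - i) I).

Definition compl_vec (n : nat) (I : seq nat) : seq nat :=
  [seq i <- iota 1 n | i \notin I].

Definition setminus_vec (I J : seq nat) : seq nat := [seq i <- I | i \notin J].
Definition symdiff_vec (I J : seq nat) : seq nat :=
  sort leq (setminus_vec I J ++ setminus_vec J I).
Definition relabel (S : seq nat) (X : seq nat) : seq nat :=
  map (fun x => (index x S).+1) X.

Definition delete_vec (b : nat) (I : seq nat) : seq nat :=
  map (fun x => if x < b then x else x.-1) [seq x <- I | x != b].

Definition cyc_vec (k n c : nat) : seq nat :=
  sort leq [seq ((c + i).-1 %% n).+1 | i <- iota 0 k].

(* Main.v *)
Require Import Defs.
From mathcomp Require Import all_boot.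
From mathcomp Require Import zify.
Set Implicit Arguments. Unset Strict Implicit. Unset Printing Implicit Defensive.

Lemma cnt_split (y x : nat) (s : seq nat) : y < x ->
  count (fun t => t < x) s = count (fun t => t < y) s + count (pred1 y) s
    + count (fun t => y < t < x) s.
Proof.
move=> yx; elim: s => //= a s ->; rewrite /=; lia.
Qed.

Lemma nthlt s i j : sorted ltn s -> i < size s -> j < size s ->
  (nth 0 s i < nth 0 s j) = (i < j).
Proof.
move=> ss si sj; case: (ltngtP i j) => h.
- by apply: (sorted_ltn_nth ltn_trans 0 ss).
- apply/negbTE; rewrite -leqNgt ltnW //.
  by apply: (sorted_ltn_nth ltn_trans 0 ss).
- by rewrite h ltnn.
Qed.

Lemma nthle s i j : sorted ltn s -> i < size s -> j < size s -> i <= j ->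
  nth 0 s i <= nth 0 s j.
Proof.
move=> ss si sj ij; rewrite leqNgt (nthlt ss sj si); lia.
Qed.

Lemma cnt_nth s x i : sorted ltn s -> i < size s ->
  (nth 0 s i < x) = (i < count (fun t => t < x) s).
Proof.
elim: s i => [|a s IH] i //= Hs Hi.
have Hs' := path_sorted Hs.
have Hall := order_path_min ltn_trans Hs.
have c0 : ~~ (a < x) -> count (fun t => t < x) s = 0.
  move=> ax; apply/eqP; rewrite -leqn0 leqNgt -has_count; apply/hasP => -[t ts tx].
  move/allP: Hall => /(_ t ts); lia.
case: i Hi => [|i] Hi /=.
- by case ax: (a < x) => //=; rewrite c0 ?ax.
- rewrite (IH i Hs' Hi).
  case ax: (a < x) => /=. by rewrite add1n ltnS.
  rewrite c0 ?ax //.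
Qed.

Lemma cnt_nthK s i : sorted ltn s -> i < size s ->
  count (fun t => t < nth 0 s i) s = i.
Proof.
move=> ss si; set c := count _ _.
have cs : c <= size s by rewrite /c count_size.
have h1 := cnt_nth (nth 0 s i) ss si; rewrite ltnn -/c in h1.
case: (ltnP c i) => ci; last by apply/eqP; rewrite eqn_leq ci leqNgt -h1.
have cs' : c < size s by lia.
have := cnt_nth (nth 0 s i) ss cs'; rewrite ltnn (nthlt ss cs' si) ci //.
Qed.

Lemma nth_cnt s x : sorted ltn s -> x \in s ->
  nth 0 s (count (fun t => t < x) s) = x.
Proof.
move=> ss /(nthP 0) [i si <-]; by rewrite cnt_nthK.
Qed.

Lemma cnt_lt_size s x : x \in s -> count (fun t => t < x) s < size s.
Proof.
move=> xs; rewrite -(count_predC (fun t => t < x)) -addn1 leq_add2l.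
rewrite -has_count; apply/hasP; exists x => //=; by rewrite ltnn.
Qed.

Lemma cnt_eq (P : pred nat) I J : uniq I -> uniq J ->
  (forall x, P x -> (x \in I) = (x \in J)) -> count P I = count P J.
Proof.
move=> uI uJ H; rewrite -!size_filter; apply: perm_size; apply: uniq_perm;
  rewrite ?filter_uniq // => x; rewrite !mem_filter; case Px: (P x) => //=; exact: H.
Qed.

Lemma sorted_uniq' s : sorted ltn s -> uniq s.
Proof. by rewrite ltn_sorted_uniq_leq => /andP[]. Qed.

Definition pat (I J : seq nat) (y z : nat) : Prop :=
  [/\ [&& y \in J, y \notin I, z \in I, z \notin J & y < z],
      (forall t, y < t < z -> (t \in I) = (t \in J))
    & count (fun t => t < y) I = (count (fun t => t < y) J).+1].

Definition crossE (I J : seq nat) : Prop :=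
  exists a b, [/\ a < b, b < size I,
    (forall l, a < l < b -> nth 0 I l = nth 0 J l)
  & [&& nth 0 I a < nth 0 J a, nth 0 J a < nth 0 I b & nth 0 I b < nth 0 J b]].

Lemma memnP (s : seq nat) (x : nat) : x \in s -> exists2 i, i < size s & nth 0 s i = x.
Proof. by move/(nthP 0). Qed.
Lemma cross_pat1 I J : sorted ltn I -> sorted ltn J -> size I = size J ->
  crossE I J -> exists y z, pat I J y z.
Proof.
move=> sI sJ eqs [a [b [ab bs mid /and3P[h1 h2 h3]]]].
have bJ : b < size J by rewrite -eqs.
have aI : a < size I by apply: ltn_trans ab bs.
have aJ : a < size J by rewrite -eqs.
have leI := nthle sI; have leJ := nthle sJ.
have ltI := nthlt sI; have ltJ := nthlt sJ.
exists (nth 0 J a), (nth 0 I b); split.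
- apply/and5P; split.
  + exact: mem_nth.
  + apply/negP => /memnP [l lI E].
    case: (ltnP a l) => al; [case: (ltnP l b) => lb |].
    * have lJ : l < size J by rewrite -eqs.
      rewrite mid ?al ?lb // in E. have := ltJ a l aJ lJ; rewrite al E ltnn //.
    * have := leI b l bs lI lb; lia.
    * have := leI l a lI aI al; lia.
  + exact: mem_nth.
  + apply/negP => /memnP [l lJ E].
    have lI : l < size I by rewrite eqs.
    case: (ltnP a l) => al; [case: (ltnP l b) => lb |].
    * rewrite -mid ?al ?lb // in E. have := ltI l b lI bs; rewrite lb E ltnn //.
    * have := leJ b l bJ lJ lb; lia.
    * have := leJ l a lJ aJ al; lia.
  + exact: h2.
- move=> t /andP[yt tz]; apply/idP/idP => /memnP [l ls E]; subst t.
  + have lJ : l < size J by rewrite -eqs.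
    case: (ltnP a l) => al; [case: (ltnP l b) => lb |].
    * rewrite mid ?al ?lb //; exact: mem_nth.
    * exfalso; have := leI b l bs ls lb; lia.
    * exfalso; have := leI l a ls aI al; lia.
  + have lI : l < size I by rewrite eqs.
    case: (ltnP a l) => al; [case: (ltnP l b) => lb |].
    * rewrite -mid ?al ?lb //; exact: mem_nth.
    * exfalso; have := leJ b l bJ ls lb; lia.
    * exfalso; have := leJ l a ls aJ al; lia.
- rewrite (cnt_nthK sJ aJ).
  set c := count _ I.
  have c1 : a < c by rewrite -(cnt_nth _ sI aI).
  have a1I : a.+1 < size I by lia.
  have c2 : ~~ (a.+1 < c).
    rewrite -(cnt_nth _ sI a1I) -leqNgt.
    case: (ltnP a.+1 b) => a1b.
    * have a1J : a.+1 < size J by rewrite -eqs.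
      rewrite mid ?a1b ?ltnSn //. apply: ltnW. by rewrite ltJ.
    * have -> : a.+1 = b by lia. exact: ltnW.
  lia.
Qed.

Lemma cross_pat2 I J : sorted ltn I -> sorted ltn J -> size I = size J ->
  (exists y z, pat I J y z) -> crossE I J.
Proof.
move=> sI sJ eqs [y [z [/and5P[yJ yI zI zJ yz] int cnt]]].
have uI := sorted_uniq' sI; have uJ := sorted_uniq' sJ.
set a := count (fun t => t < y) J in cnt.
set b := count (fun t => t < z) I.
have Ja : nth 0 J a = y by apply: nth_cnt.
have Ib : nth 0 I b = z by apply: nth_cnt.
have bs : b < size I by apply: cnt_lt_size.
have ab : a.+1 <= b.
  rewrite -cnt; apply: sub_count => t /=; lia.
have eqc : forall x, y < x -> x <= z ->
    count (fun t => t < x) I = count (fun t => t < x) J.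
  move=> x yx xz; rewrite (cnt_split _ yx) (cnt_split J yx).
  rewrite (count_uniq_mem _ uI) (count_uniq_mem _ uJ) (negbTE yI) yJ cnt -/a.
  rewrite (@cnt_eq _ I J uI uJ); first lia.
  move=> t /andP[yt tx]; apply: int; lia.
have bJ : b < size J by rewrite -eqs.
exists a, b; split => //.
- move=> l /andP[al lb].
  have lI : l < size I by lia.
  set x := nth 0 I l.
  have xI : x \in I by apply: mem_nth.
  have xy : y < x.
    rewrite ltn_neqAle; apply/andP; split.
    + by apply/eqP => E; rewrite E xI in yI.
    + rewrite leqNgt (cnt_nth _ sI lI) cnt; lia.
  have xz : x < z by rewrite -Ib /x (nthlt sI lI bs).
  have xJ : x \in J by rewrite -int ?xy.
  have := nth_cnt sJ xJ; rewrite -(eqc x xy (ltnW xz)) /x (cnt_nthK sI lI) => ->//.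
- apply/and3P; split.
  + rewrite Ja (cnt_nth _ sI) ?cnt //; lia.
  + by rewrite Ja Ib.
  + rewrite Ib ltn_neqAle; apply/andP; split.
    * apply/eqP => E; move: zJ; rewrite E mem_nth //.
    * rewrite leqNgt (cnt_nth _ sJ bJ) -(eqc z yz (leqnn z)) -/b ltnn //.
Qed.

Definition nc' (I J : seq nat) : Prop :=
  ~ (exists y z, pat I J y z) /\ ~ (exists y z, pat J I y z).

Lemma nc_cross I J : size I = size J ->
  noncrossing I J <-> (~ crossE I J /\ ~ crossE J I).
Proof.
move=> eqs; split.
- move/forallP => H; split.
  + case=> a [b [ab bs mid cr]].
    have aI : a < size I by lia.
    move: (H (Ordinal aI)) => /forallP /(_ (Ordinal bs)) /implyP /=.
    rewrite ab /= => H1.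
    suff /H1 : [forall l : 'I_(size I), (a < l < b) ==> (nth 0 I l == nth 0 J l)].
      rewrite /arcs_cross; move/and3P: cr => [c1 c2 c3]; rewrite c1 c2 c3 //.
    apply/forallP => l; apply/implyP => hl; apply/eqP; exact: mid.
  + case=> a [b [ab bs mid cr]].
    have bI : b < size I by lia.
    have aI : a < size I by lia.
    move: (H (Ordinal aI)) => /forallP /(_ (Ordinal bI)) /implyP /=.
    rewrite ab /= => H1.
    suff /H1 : [forall l : 'I_(size I), (a < l < b) ==> (nth 0 I l == nth 0 J l)].
      rewrite /arcs_cross; move/and3P: cr => [c1 c2 c3]; rewrite c1 c2 c3 /= orbT //.
    apply/forallP => l; apply/implyP => hl; apply/eqP; symmetry; exact: mid.
- case=> n1 n2; apply/forallP => a; apply/forallP => b.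
  apply/implyP => /andP[ab /forallP mid].
  have mid' : forall l, a < l < b -> nth 0 I l = nth 0 J l.
    move=> l hl; have lI : l < size I by case/andP: hl => _ lb; apply: ltn_trans lb (ltn_ord b).
    by move: (mid (Ordinal lI)) => /implyP /(_ hl) /eqP.
  apply/negP; rewrite /arcs_cross => /orP [/andP[/andP[c1 c2] c3]|/andP[/andP[c1 c2] c3]].
  + apply: n1; exists a, b; split => //; by rewrite c1 c2 c3.
  + apply: n2; exists a, b; split => //; first by rewrite -eqs.
    * move=> l hl; symmetry; exact: mid'.
    * by rewrite c1 c2 c3.
Qed.

Lemma ncP I J : sorted ltn I -> sorted ltn J -> size I = size J ->
  noncrossing I J <-> nc' I J.
Proof.
move=> sI sJ eqs; rewrite nc_cross //; split; case=> n1 n2; split.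
- by move/(cross_pat2 sI sJ eqs).
- by move/(cross_pat2 sJ sI (esym eqs)).
- by move/(cross_pat1 sI sJ eqs).
- by move/(cross_pat1 sJ sI (esym eqs)).
Qed.

Lemma nc_eq I J I' J' : sorted ltn I -> sorted ltn J -> size I = size J ->
  sorted ltn I' -> sorted ltn J' -> size I' = size J' ->
  (nc' I J <-> nc' I' J') -> noncrossing I J = noncrossing I' J'.
Proof.
move=> sI sJ e sI' sJ' e' H.
apply/idP/idP => h.
- apply/(ncP sI' sJ' e'); apply/H; exact/(ncP sI sJ e).
- apply/(ncP sI sJ e); apply/H; exact/(ncP sI' sJ' e').
Qed.

Lemma nc'C I J : nc' I J <-> nc' J I.
Proof. by split; case. Qed.

Lemma cnt_part (P a : pred nat) s :
  count P s = count P [seq x <- s | a x] + count P [seq x <- s | ~~ a x].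
Proof. elim: s => //= x s ->; case: (a x) => /=; lia. Qed.

Lemma cnt3 y z s : y <= z ->
  count (fun t => t < y) s + count (fun t => y <= t <= z) s
    + count (fun t => z < t) s = size s.
Proof. move=> yz; elim: s => //= x s <-; lia. Qed.

Lemma cnt_mid y z s : y < z ->
  count (fun t => y <= t <= z) s = count (fun t => y < t < z) s
    + count (pred1 y) s + count (pred1 z) s.
Proof. move=> yz; elim: s => //= x s ->; rewrite /=; lia. Qed.

Lemma pat_filter (q : pred nat) I J y z : uniq I -> uniq J ->
  (forall x, ~~ q x -> (x \in I) = (x \in J)) ->
  pat I J y z <-> pat [seq x <- I | q x] [seq x <- J | q x] y z.
Proof.
move=> uI uJ hq.
have ce : forall P : pred nat, count P [seq x <- I | ~~ q x] = count P [seq x <- J | ~~ q x].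
  move=> P; apply: cnt_eq; rewrite ?filter_uniq // => x _; rewrite !mem_filter.
  case qx: (q x) => //=; apply: hq; by rewrite qx.
have cI := cnt_part (fun t => t < y) q I.
have cJ := cnt_part (fun t => t < y) q J.
have ceq := ce (fun t => t < y).
split.
- case=> [/and5P[yJ yI zI zJ yz] int cnt].
  have qy : q y by apply/negP => /negP /hq; rewrite yJ (negbTE yI).
  have qz : q z by apply/negP => /negP /hq; rewrite zI (negbTE zJ).
  split.
  + by rewrite !mem_filter qy qz yJ zI (negbTE yI) (negbTE zJ) yz.
  + move=> t ht; rewrite !mem_filter int //.
  + lia.
- case=> [/and5P[yJ yI zI zJ yz] int cnt].
  rewrite mem_filter in yJ; case/andP: yJ => qy yJ.
  rewrite mem_filter in zI; case/andP: zI => qz zI.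
  rewrite mem_filter qy /= in yI; rewrite mem_filter qz /= in zJ.
  split.
  + by rewrite yJ zI yI zJ yz.
  + move=> t ht; case qt: (q t); last by apply: hq; rewrite qt.
    by move: (int t ht); rewrite !mem_filter qt.
  + lia.
Qed.

Lemma pat_rev I J y z : pat (rev I) (rev J) y z <-> pat I J y z.
Proof.
rewrite /pat !mem_rev !count_rev; split; case=> h1 h2 h3; split => // t ht.
- by move: (h2 t ht); rewrite !mem_rev.
- by rewrite !mem_rev; apply: h2.
Qed.

Section Transport.
Variables (D : pred nat) (f : nat -> nat).

Lemma memf (inj : forall x y, D x -> D y -> f x = f y -> x = y) x s :
  D x -> all D s -> (f x \in map f s) = (x \in s).
Proof.
move=> Dx /allP Ds; apply/mapP/idP => [[u us E]|xs]; last by exists x.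
by rewrite (inj x u Dx (Ds u us) E).
Qed.

Hypothesis mono : forall x y, D x -> D y -> x < y -> f x < f y.

Lemma mono_lt x y : D x -> D y -> (f x < f y) = (x < y).
Proof.
move=> Dx Dy; case: (ltngtP x y) => h.
- exact: mono.
- by apply/negbTE; rewrite -leqNgt ltnW // mono.
- by rewrite h ltnn.
Qed.

Lemma mono_inj x y : D x -> D y -> f x = f y -> x = y.
Proof.
move=> Dx Dy E; case: (ltngtP x y) => h //.
- by have := mono Dx Dy h; rewrite E ltnn.
- by have := mono Dy Dx h; rewrite E ltnn.
Qed.

Lemma pat_map I J : all D I -> all D J ->
  (exists y z, pat I J y z) <-> (exists y z, pat (map f I) (map f J) y z).
Proof.
move=> DI DJ.
have mf := memf mono_inj.
have cf : forall y, D y -> forall s, all D s ->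
    count (fun t => t < f y) (map f s) = count (fun t => t < y) s.
  move=> y Dy s /allP Ds; rewrite count_map; apply: eq_in_count => u us /=.
  exact: mono_lt (Ds u us) Dy.
split.
- case=> y [z [/and5P[yJ yI zI zJ yz] int cnt]].
  have Dy : D y by move/allP: DJ; apply.
  have Dz : D z by move/allP: DI; apply.
  exists (f y), (f z); split.
  + by rewrite !mf // yJ yI zI zJ mono_lt // yz.
  + move=> t /andP[yt tz].
    apply/mapP/mapP => -[u us E]; subst t; exists u => //.
    * have Du : D u by move/allP: DI; apply.
      rewrite -int // -(mono_lt Dy Du) -(mono_lt Du Dz) yt tz //.
    * have Du : D u by move/allP: DJ; apply.
      rewrite int // -(mono_lt Dy Du) -(mono_lt Du Dz) yt tz //.
  + by rewrite !cf.
- case=> y' [z' [/and5P[yJ yI zI zJ yz] int cnt]].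
  case/mapP: yJ => y yJ Ey; case/mapP: zI => z zI Ez; subst y' z'.
  have Dy : D y by move/allP: DJ; apply.
  have Dz : D z by move/allP: DI; apply.
  exists y, z; split.
  + rewrite !mf // in yI zJ; by rewrite yJ yI zI zJ -(mono_lt Dy Dz).
  + move=> t /andP[yt tz].
    case tI: (t \in I); case tJ: (t \in J) => //.
    * have Dt : D t by move/allP: DI; apply.
      have := int (f t); rewrite !mf // tI tJ mono_lt // mono_lt // yt tz; by move/(_ isT).
    * have Dt : D t by move/allP: DJ; apply.
      have := int (f t); rewrite !mf // tI tJ mono_lt // mono_lt // yt tz; by move/(_ isT).
  + by rewrite !cf in cnt.
Qed.
End Transport.

Definition patR (I J : seq nat) (y z : nat) : Prop :=
  [/\ [&& y \in J, y \notin I, z \in I, z \notin J & y < z],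
      (forall t, y < t < z -> (t \in I) = (t \in J))
    & count (fun t => z < t) J = (count (fun t => z < t) I).+1].

Lemma pat_R (I J : seq nat) (y z : nat) : uniq I -> uniq J -> size I = size J ->
  pat I J y z <-> patR I J y z.
Proof.
move=> uI uJ e.
suff H : [&& y \in J, y \notin I, z \in I, z \notin J & y < z] ->
  (forall t, y < t < z -> (t \in I) = (t \in J)) ->
  count (fun t => t < y) I + count (fun t => z < t) I =
  count (fun t => t < y) J + count (fun t => z < t) J.
  by split; case=> h1 h2 h3; split => //; have := H h1 h2; lia.
move=> /and5P[yJ yI zI zJ yz] int.
have e1 := cnt3 I (ltnW yz); have e2 := cnt3 J (ltnW yz).
rewrite (cnt_mid _ yz) in e1; rewrite (cnt_mid _ yz) in e2.
rewrite !count_uniq_mem // (negbTE yI) (negbTE zJ) yJ zI in e1 e2.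
have := @cnt_eq (fun t => y < t < z) I J uI uJ; rewrite /=.
move=> /(_ (fun t ht => int t ht)) ce.
lia.
Qed.

Section TransportR.
Variables (D : pred nat) (f : nat -> nat).
Hypothesis anti : forall x y, D x -> D y -> x < y -> f y < f x.

Lemma anti_lt x y : D x -> D y -> (f x < f y) = (y < x).
Proof.
move=> Dx Dy; case: (ltngtP x y) => h.
- by apply/negbTE; rewrite -leqNgt ltnW // anti.
- exact: anti.
- by rewrite h ltnn.
Qed.

Lemma anti_inj x y : D x -> D y -> f x = f y -> x = y.
Proof.
move=> Dx Dy E; case: (ltngtP x y) => h //.
- by have := anti Dx Dy h; rewrite E ltnn.
- by have := anti Dy Dx h; rewrite E ltnn.
Qed.

Lemma pat_mapR I J : all D I -> all D J ->
  (exists y z, pat (map f I) (map f J) y z) <-> (exists y z, patR J I y z).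
Proof.
move=> DI DJ.
have mf := memf anti_inj.
have cf : forall y, D y -> forall s, all D s ->
    count (fun t => t < f y) (map f s) = count (fun t => y < t) s.
  move=> y Dy s /allP Ds; rewrite count_map; apply: eq_in_count => u us /=.
  exact: anti_lt (Ds u us) Dy.
split.
- case=> y' [z' [/and5P[yJ yI zI zJ yz] int cnt]].
  case/mapP: yJ => y yJ Ey; case/mapP: zI => z zI Ez; subst y' z'.
  have Dy : D y by move/allP: DJ; apply.
  have Dz : D z by move/allP: DI; apply.
  exists z, y; split.
  + rewrite !mf // in yI zJ; by rewrite yJ yI zI zJ -(anti_lt Dy Dz).
  + move=> t /andP[zt ty].
    case tI: (t \in I); case tJ: (t \in J) => //.
    * have Dt : D t by move/allP: DI; apply.
      have := int (f t); rewrite !mf // tI tJ anti_lt // anti_lt // zt ty; by move/(_ isT).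
    * have Dt : D t by move/allP: DJ; apply.
      have := int (f t); rewrite !mf // tI tJ anti_lt // anti_lt // zt ty; by move/(_ isT).
  + by rewrite !cf in cnt.
- case=> z [y [/and5P[zI zJ yJ yI zy] int cnt]].
  have Dy : D y by move/allP: DJ; apply.
  have Dz : D z by move/allP: DI; apply.
  exists (f y), (f z); split.
  + by rewrite !mf // yJ yI zI zJ anti_lt // zy.
  + move=> t /andP[yt tz].
    apply/mapP/mapP => -[u us E]; subst t; exists u => //.
    * have Du : D u by move/allP: DI; apply.
      rewrite int // -(anti_lt Du Dz) -(anti_lt Dy Du) tz yt //.
    * have Du : D u by move/allP: DJ; apply.
      rewrite -int // -(anti_lt Du Dz) -(anti_lt Dy Du) tz yt //.
  + by rewrite !cf.
Qed.
End TransportR.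

Lemma VknP k n I : Vkn k n I ->
  [/\ size I = k, sorted ltn I & all (fun i => 0 < i <= n) I].
Proof. by case/and3P => /eqP. Qed.

Lemma Vkn_intro k n I : size I = k -> sorted ltn I -> all (fun i => 0 < i <= n) I -> Vkn k n I.
Proof. by rewrite /Vkn => -> -> ->; rewrite eqxx. Qed.

Lemma face_iso (V1 : pred (seq nat)) k1 n1 k2 n2 (f : seq nat -> seq nat) :
  (forall I, V1 I -> Vkn k1 n1 I) -> (forall I, V1 I -> Vkn k2 n2 (f I)) ->
  (forall I J, V1 I -> V1 J -> noncrossing I J = noncrossing (f I) (f J)) ->
  forall F, all V1 F -> is_face k1 n1 F = is_face k2 n2 (map f F).
Proof.
move=> h1 h2 h3 F /allP VF; rewrite /is_face !all_map.
have -> : all (Vkn k1 n1) F by apply/allP => I /VF /h1.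
have -> : all (preim f (Vkn k2 n2)) F by apply/allP => I /VF /h2.
congr andb; apply: eq_in_all => I IF /=; rewrite all_map.
apply: eq_in_all => J JF /=; apply: h3; exact: VF.
Qed.

Lemma iso_intro (V1 : pred (seq nat)) k1 n1 k2 n2 (f g : seq nat -> seq nat) :
  (forall I, V1 I -> Vkn k1 n1 I) -> (forall I, V1 I -> Vkn k2 n2 (f I)) ->
  (forall I, V1 I -> g (f I) = I) ->
  (forall J, Vkn k2 n2 J -> V1 (g J) /\ f (g J) = J) ->
  (forall I J, V1 I -> V1 J -> noncrossing I J = noncrossing (f I) (f J)) ->
  complex_iso V1 (is_face k1 n1) (Vkn k2 n2) (is_face k2 n2) f.
Proof.
move=> h1 h2 gf fg h3; split => //.
- move=> I J VI VJ E; by rewrite -(gf I VI) -(gf J VJ) E.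
- move=> J /fg [? ?]; by exists (g J).
- exact: face_iso.
Qed.

Lemma VknU k n I : Vkn k n I -> uniq I.
Proof. by case/VknP => _ /sorted_uniq'. Qed.

Lemma mem_compl n I x : (x \in compl_vec n I) = (0 < x <= n) && (x \notin I).
Proof. rewrite /compl_vec mem_filter mem_iota andbC; congr andb; lia. Qed.

Lemma compl_sorted n I : sorted ltn (compl_vec n I).
Proof. apply: sorted_filter; [exact: ltn_trans | exact: iota_ltn_sorted]. Qed.

Lemma cnt_iota m p y : count (fun t => t < y) (iota m p) = minn (y - m) p.
Proof. elim: p m => [|p IH] m /=; first lia. rewrite IH; lia. Qed.

Lemma cnt_compl n I y : uniq I -> all (fun i => 0 < i <= n) I -> y <= n.+1 ->
  count (fun t => t < y) (compl_vec n I) + count (fun t => t < y) I = y.-1.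
Proof.
move=> uI /allP rI yn.
have -> : count (fun t => t < y) I =
    count (fun t => t < y) [seq x <- iota 1 n | x \in I].
  apply: cnt_eq; rewrite ?filter_uniq ?iota_uniq // => x _.
  rewrite mem_filter mem_iota; case xI: (x \in I) => //=.
  have := rI x xI; lia.
have E : [seq x <- iota 1 n | x \in I] = [seq x <- iota 1 n | ~~ (x \notin I)].
  by apply: eq_filter => x; rewrite negbK.
rewrite E /compl_vec -cnt_part cnt_iota; lia.
Qed.

Lemma compl_size n k I : Vkn k n I -> size (compl_vec n I) = n - k.
Proof.
case/VknP => sz sI rI.
have := cnt_compl (sorted_uniq' sI) rI (leqnn n.+1).
have -> : count (fun t => t < n.+1) (compl_vec n I) = size (compl_vec n I).
  rewrite -size_filter; congr size; apply/all_filterP/allP => x.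
  rewrite mem_compl; lia.
have -> : count (fun t => t < n.+1) I = size I.
  rewrite -size_filter; congr size; apply/all_filterP/allP => x /(allP rI); lia.
lia.
Qed.

Lemma compl_range n I : all (fun i => 0 < i <= n) (compl_vec n I).
Proof. apply/allP => x; rewrite mem_compl; by case/andP. Qed.

Lemma complK n I : sorted ltn I -> all (fun i => 0 < i <= n) I ->
  compl_vec n (compl_vec n I) = I.
Proof.
move=> sI /allP rI; apply: (irr_sorted_eq ltn_trans ltnn (compl_sorted _ _) sI).
move=> x; rewrite !mem_compl; case xI: (x \in I) => /=.
- by rewrite andbF andbT (rI x xI).
- by rewrite andbT andbN.
Qed.

Definition EP I J := exists y z, pat I J y z.

Lemma EP_iff (P Q : nat -> nat -> Prop) : (forall y z, P y z <-> Q y z) ->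
  (exists y z, P y z) <-> (exists y z, Q y z).
Proof. move=> H; split => -[y [z /H h]]; by exists y, z. Qed.

Lemma nc'_of I J I' J' : (EP I J <-> EP I' J') -> (EP J I <-> EP J' I') ->
  nc' I J <-> nc' I' J'.
Proof. rewrite /nc' /EP => h1 h2; rewrite h1 h2; tauto. Qed.

Lemma pat_compl n I J y z : uniq I -> uniq J ->
  all (fun i => 0 < i <= n) I -> all (fun i => 0 < i <= n) J ->
  pat (compl_vec n I) (compl_vec n J) y z <-> pat J I y z.
Proof.
move=> uI uJ rI rJ; split.
- case=> [/and5P[yJ yI zI zJ yz] int cnt].
  rewrite !mem_compl in yJ yI zI zJ.
  case/andP: yJ => ry yJ; case/andP: zI => rz zI.
  rewrite ry /= negbK in yI; rewrite rz /= negbK in zJ.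
  split.
  + by rewrite yI yJ zJ zI yz.
  + move=> t ht; move: (int t ht); rewrite !mem_compl.
    have -> : 0 < t <= n by lia.
    by move=> /= /negb_inj ->.
  + have := cnt_compl uI rI (_ : y <= n.+1); have := cnt_compl uJ rJ (_ : y <= n.+1).
    move=> /(_ ltac:(lia)) h1 /(_ ltac:(lia)) h2; lia.
- case=> [/and5P[yI yJ zJ zI yz] int cnt].
  have ry : 0 < y <= n by move/allP: rI => /(_ y yI).
  have rz : 0 < z <= n by move/allP: rJ => /(_ z zJ).
  split.
  + by rewrite !mem_compl ry rz yI yJ zJ zI yz.
  + move=> t ht; rewrite !mem_compl int //.
  + have := cnt_compl uI rI (_ : y <= n.+1); have := cnt_compl uJ rJ (_ : y <= n.+1).
    move=> /(_ ltac:(lia)) h1 /(_ ltac:(lia)) h2; lia.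
Qed.

Lemma compl_V k n I : k <= n -> Vkn k n I -> Vkn (n - k) n (compl_vec n I).
Proof.
move=> kn VI; apply: Vkn_intro; [exact: compl_size VI|exact: compl_sorted|exact: compl_range].
Qed.

Lemma nc_compl k n I J : k <= n -> Vkn k n I -> Vkn k n J ->
  noncrossing I J = noncrossing (compl_vec n I) (compl_vec n J).
Proof.
move=> kn VI VJ.
have [sz1 sI rI] := VknP VI; have [sz2 sJ rJ] := VknP VJ.
have [sz1' sI' rI'] := VknP (compl_V kn VI); have [sz2' sJ' rJ'] := VknP (compl_V kn VJ).
apply: nc_eq => //; [by rewrite sz1 sz2 | by rewrite sz1' sz2' |].
have uI := sorted_uniq' sI; have uJ := sorted_uniq' sJ.
rewrite nc'C; apply: nc'_of; rewrite /EP; apply: EP_iff => y z;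
  rewrite pat_compl //.
Qed.

Lemma part2 k n : 1 <= k -> k <= n - 1 ->
  complex_iso (Vkn k n) (is_face k n) (Vkn (n - k) n) (is_face (n - k) n)
               (compl_vec n) /\
   forall I J, Vkn k n I -> Vkn k n J ->
     noncrossing I J = noncrossing (compl_vec n I) (compl_vec n J).
Proof.
move=> k1 kn; have kn' : k <= n by lia.
split; last by move=> I J; apply: nc_compl.
apply: (@iso_intro _ _ _ _ _ _ (compl_vec n)) => //.
- move=> I; exact: compl_V.
- by move=> I /VknP [_ sI rI]; rewrite complK.
- move=> J VJ; have := compl_V (leq_subr k n) VJ; rewrite subKn // => V.
  split => //; case/VknP: VJ => _ sJ rJ; by rewrite complK.
- move=> I J; exact: nc_compl.
Qed.

Lemma refl_V k n I : Vkn k n I -> Vkn k n (reflect_vec n I).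
Proof.
case/VknP => sz sI rI; apply: Vkn_intro.
- by rewrite size_rev size_map.
- rewrite /reflect_vec rev_sorted.
  apply: (homo_sorted_in (P := fun i => 0 < i <= n) (e := ltn)) => //.
  move=> x y hx hy /=; rewrite unfold_in in hx hy; lia.
- rewrite /reflect_vec all_rev all_map; apply/allP => x /(allP rI) /=; lia.
Qed.

Lemma reflK n I : all (fun i => 0 < i <= n) I -> reflect_vec n (reflect_vec n I) = I.
Proof.
move=> /allP rI; rewrite /reflect_vec map_rev revK -map_comp.
apply: map_id_in => x /rI /=; lia.
Qed.

Lemma EP_refl k n A B : Vkn k n A -> Vkn k n B ->
  EP (reflect_vec n A) (reflect_vec n B) <-> EP B A.
Proof.
move=> VA VB; have [sz1 sA rA] := VknP VA; have [sz2 sB rB] := VknP VB.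
rewrite /EP /reflect_vec.
rewrite (EP_iff (fun y z => pat_rev _ _ y z)).
rewrite (@pat_mapR (fun i => 0 < i <= n) (fun i => n.+1 - i)) //.
- apply: EP_iff => y z; rewrite pat_R //; [exact: sorted_uniq' | exact: sorted_uniq' | by rewrite sz1 sz2].
- move=> x y /= hx hy; lia.
Qed.

Lemma nc_refl k n I J : Vkn k n I -> Vkn k n J ->
  noncrossing I J = noncrossing (reflect_vec n I) (reflect_vec n J).
Proof.
move=> VI VJ.
have [sz1 sI rI] := VknP VI; have [sz2 sJ rJ] := VknP VJ.
have [sz1' sI' rI'] := VknP (refl_V VI); have [sz2' sJ' rJ'] := VknP (refl_V VJ).
apply: nc_eq => //; [by rewrite sz1 sz2 | by rewrite sz1' sz2' |].
rewrite nc'C; apply: nc'_of; rewrite ?(EP_refl VI VJ) ?(EP_refl VJ VI); tauto.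
Qed.

Lemma part1 k n :
  complex_iso (Vkn k n) (is_face k n) (Vkn k n) (is_face k n) (reflect_vec n).
Proof.
apply: (@iso_intro _ _ _ _ _ _ (reflect_vec n)) => //.
- move=> I; exact: refl_V.
- by move=> I /VknP [_ sI rI]; rewrite reflK.
- move=> J VJ; split; first exact: refl_V.
  case/VknP: VJ => _ _ rJ; by rewrite reflK.
- move=> I J; exact: nc_refl.
Qed.

Lemma part3 k n I J : Vkn k n I -> Vkn k n J ->
     let m := size (setminus_vec I J) in
     let S := symdiff_vec I J in
     [/\ size (setminus_vec J I) = m,
         Vkn m (2 * m) (relabel S (setminus_vec I J)),
         Vkn m (2 * m) (relabel S (setminus_vec J I))
       & noncrossing I J =
         noncrossing (relabel S (setminus_vec I J))
                     (relabel S (setminus_vec J I))].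
Proof.
move=> VI VJ m S.
have [sz1 sI rI] := VknP VI; have [sz2 sJ rJ] := VknP VJ.
have uI := sorted_uniq' sI; have uJ := sorted_uniq' sJ.
set A := setminus_vec I J; set B := setminus_vec J I.
set q := fun x => ~~ ((x \in I) && (x \in J)).
have EA : A = [seq x <- I | q x].
  by apply: eq_in_filter => x xI; rewrite /q xI.
have EB : B = [seq x <- J | q x].
  by apply: eq_in_filter => x xJ; rewrite /q xJ andbT.
have sA : sorted ltn A by apply: sorted_filter => //; exact: ltn_trans.
have sB : sorted ltn B by apply: sorted_filter => //; exact: ltn_trans.
have uA := sorted_uniq' sA; have uB := sorted_uniq' sB.
have szAB : size B = m.
  have h1 : size I = size A + size [seq x <- I | ~~ (x \notin J)].
    by have := cnt_part predT (fun x => x \notin J) I; rewrite !count_predT.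
  have h2 : size J = size B + size [seq x <- J | ~~ (x \notin I)].
    by have := cnt_part predT (fun x => x \notin I) J; rewrite !count_predT.
  have ce : size [seq x <- I | ~~ (x \notin J)] = size [seq x <- J | ~~ (x \notin I)].
    rewrite -!count_predT; apply: cnt_eq; rewrite ?filter_uniq // => x _.
    by rewrite !mem_filter !negbK andbC.
  rewrite /m -/A; clear -h1 h2 ce sz1 sz2; lia.
have uAB : uniq (A ++ B).
  rewrite cat_uniq uA uB andbT /=; apply/hasPn => x xB /=.
  move: xB; rewrite /A /B /setminus_vec !mem_filter; case: (x \in I); case: (x \in J) => //.
have sS : sorted ltn S.
  rewrite /S /symdiff_vec ltn_sorted_uniq_leq sort_uniq uAB /=.
  exact: (sort_sorted leq_total).
have uS := sorted_uniq' sS.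
have szS : size S = 2 * m.
  by rewrite /S /symdiff_vec size_sort size_cat -/A -/B szAB /m addnn mul2n.
set h := fun x => (index x S).+1.
have mono : forall x y, (x \in S) -> (y \in S) -> x < y -> h x < h y.
  move=> x y xS yS xy; rewrite /h ltnS.
  have ix : index x S < size S by rewrite index_mem.
  have iy : index y S < size S by rewrite index_mem.
  by rewrite -(nthlt sS ix iy) !nth_index.
have AS : all (fun x => x \in S) A.
  by apply/allP => x xA; rewrite /S /symdiff_vec mem_sort mem_cat xA.
have BS : all (fun x => x \in S) B.
  by apply/allP => x xB; rewrite /S /symdiff_vec mem_sort mem_cat xB orbT.
have VX : forall X, all (fun x => x \in S) X -> sorted ltn X -> size X = m ->
    Vkn m (2 * m) (relabel S X).
  move=> X XS sX szX; apply: Vkn_intro.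
  - by rewrite size_map.
  - apply: (homo_sorted_in (P := fun x => x \in S) (e := ltn)) => //.
  - rewrite all_map; apply/allP => x /(allP XS) xS /=.
    rewrite /h -szS index_mem xS //.
have VA := VX A AS sA erefl.
have VB := VX B BS sB szAB.
split => //.
have [_ sA' _] := VknP VA; have [_ sB' _] := VknP VB.
apply: nc_eq => //; [by rewrite sz1 sz2 | by rewrite /relabel !size_map szAB |].
have hq : forall x, ~~ q x -> (x \in I) = (x \in J).
  by move=> x; rewrite /q negbK => /andP[-> ->].
have hq' : forall x, ~~ q x -> (x \in J) = (x \in I).
  by move=> x /hq ->.
apply: nc'_of; rewrite /EP.
- rewrite (EP_iff (fun y z => pat_filter y z uI uJ hq)) -EA -EB.
  exact: (pat_map mono).
- rewrite (EP_iff (fun y z => pat_filter y z uJ uI hq')) -EA -EB.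
  exact: (pat_map mono).
Qed.

Lemma cnt_neq (b : nat) s : count (fun x => x != b) s + count (pred1 b) s = size s.
Proof. elim: s => //= x s <-; lia. Qed.

Definition gb (b x : nat) := if x < b then x else x.-1.
Definition hb (b y : nat) := if y < b then y else y.+1.

Lemma gb_mono b x y : x != b -> y != b -> x < y -> gb b x < gb b y.
Proof. rewrite /gb => xb yb xy; case: (ltnP x b) => h1; case: (ltnP y b) => h2; lia. Qed.

Lemma gb_range b n x : 1 <= b <= n -> 0 < x <= n -> x != b -> 0 < gb b x <= n - 1.
Proof. rewrite /gb => hb hx xb; case: (ltnP x b) => h1; lia. Qed.

Lemma hbK b y : gb b (hb b y) = y.
Proof. rewrite /gb /hb; case: (ltnP y b) => h; [by rewrite h | rewrite ltnNge ltnW //]. Qed.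

Lemma hb_neq b y : hb b y != b.
Proof. rewrite /hb; case: (ltnP y b) => h; lia. Qed.

Lemma hb_range b n y : 1 <= b <= n -> 0 < y <= n - 1 -> 0 < hb b y <= n.
Proof. rewrite /hb => hb' hy; case: (ltnP y b) => h1; lia. Qed.

Lemma delete_sorted (b : nat) (I : seq nat) : sorted ltn I -> sorted ltn (delete_vec b I).
Proof.
move=> sI; apply: (homo_sorted_in (P := fun x => x != b) (e := ltn)).
- move=> x y hx hy; rewrite unfold_in in hx hy; exact: gb_mono.
- exact: filter_all.
- apply: sorted_filter => //; exact: ltn_trans.
Qed.

Lemma delete_size (b : nat) (I : seq nat) : uniq I -> size (delete_vec b I) + (b \in I) = size I.
Proof.
move=> uI; rewrite size_map size_filter -(count_uniq_mem b uI); exact: cnt_neq.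
Qed.

Lemma iso_ext (V1 V1' : pred (seq nat)) f1 V2 f2 f : (forall I, V1 I = V1' I) ->
  complex_iso V1 f1 V2 f2 f -> complex_iso V1' f1 V2 f2 f.
Proof.
move=> E [h1 h2 h3 h4]; split.
- by move=> I; rewrite -E; apply: h1.
- by move=> I J; rewrite -!E; apply: h2.
- by move=> J /h3 [I VI <-]; exists I; rewrite -?E.
- move=> F VF; apply: h4; apply/allP => I /(allP VF); by rewrite E.
Qed.

Lemma part4 k k' n b (beta : bool) : 1 <= b <= n -> k' + beta = k ->
  complex_iso [pred I | Vkn k n I && ((b \in I) == beta)] (is_face k n)
              (Vkn k' (n - 1)) (is_face k' (n - 1)) (delete_vec b).
Proof.
move=> hbn kk.
pose g' := fun J : seq nat => [seq x <- iota 1 n | if x == b then beta else gb b x \in J].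
have D_inj : forall x y, x != b -> y != b -> gb b x = gb b y -> x = y.
  move=> x y xb yb E; case: (ltngtP x y) => h //.
  - by have := gb_mono xb yb h; rewrite E ltnn.
  - by have := gb_mono yb xb h; rewrite E ltnn.
have mem_del : forall I x, x != b -> (gb b x \in delete_vec b I) = (x \in I).
  move=> I x xb; rewrite /delete_vec (memf (D := fun x => x != b)) //.
  - by rewrite mem_filter xb.
  - exact: filter_all.
have mem_g' : forall J x, (x \in g' J) = (0 < x <= n) &&
    (if x == b then beta else gb b x \in J).
  move=> J x; rewrite mem_filter mem_iota andbC; congr andb; lia.
have g'sorted : forall J, sorted ltn (g' J).
  move=> J; apply: sorted_filter; [exact: ltn_trans | exact: iota_ltn_sorted].
have bg' : forall J, (b \in g' J) = beta.
  by move=> J; rewrite mem_g' eqxx hbn.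
apply: (@iso_intro _ k n _ _ _ g').
- by move=> I /andP[].
- move=> I /andP[VI /eqP bI]; have [sz sI rI] := VknP VI; apply: Vkn_intro.
  + have := delete_size b (sorted_uniq' sI); rewrite bI; lia.
  + exact: delete_sorted.
  + rewrite /delete_vec all_map; apply/allP => x; rewrite mem_filter => /andP[xb xI] /=.
    apply: gb_range => //; exact: (allP rI).
- move=> I /andP[VI /eqP bI]; have [sz sI rI] := VknP VI.
  apply: (irr_sorted_eq ltn_trans ltnn (g'sorted _) sI) => x.
  rewrite mem_g'; case: eqVneq => [->|xb].
  + by rewrite bI hbn.
  + rewrite mem_del //; case xI: (x \in I); rewrite ?andbF //.
    by rewrite (allP rI x xI).
- move=> J VJ; have [sz sJ rJ] := VknP VJ.
  have E : delete_vec b (g' J) = J.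
    apply: (irr_sorted_eq ltn_trans ltnn (delete_sorted _ (g'sorted J)) sJ) => y.
    apply/mapP/idP => [[x] | yJ].
    * rewrite mem_filter mem_g' => /andP[xb /andP[_]]; rewrite (negbTE xb) => h ->//.
    * exists (hb b y); last exact: (esym (hbK b y)).
      rewrite mem_filter mem_g' hb_neq (negbTE (hb_neq b y)) /= hbK yJ andbT.
      apply: hb_range => //; exact: (allP rJ).
  split => //; rewrite /= bg' eqxx andbT; apply: Vkn_intro => //.
  + have := delete_size b (sorted_uniq' (g'sorted J)); rewrite E bg' sz; lia.
  + apply/allP => x; rewrite mem_g'; by case/andP.
- move=> I J /andP[VI /eqP bI] /andP[VJ /eqP bJ].
  have [sz1 sI rI] := VknP VI; have [sz2 sJ rJ] := VknP VJ.
  have uI := sorted_uniq' sI; have uJ := sorted_uniq' sJ.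
  have e1 := delete_size b uI; have e2 := delete_size b uJ.
  apply: nc_eq => //; [by rewrite sz1 sz2 | exact: delete_sorted | exact: delete_sorted |
    by move: e1 e2; rewrite bI bJ sz1 sz2 => e1 e2; clear -e1 e2; lia |].
  have hq : forall x, ~~ (x != b) -> (x \in I) = (x \in J).
    by move=> x; rewrite negbK => /eqP ->; rewrite bI bJ.
  have hq' : forall x, ~~ (x != b) -> (x \in J) = (x \in I).
    by move=> x /hq ->.
  have mono : forall x y, x != b -> y != b -> x < y -> gb b x < gb b y by exact: gb_mono.
  apply: nc'_of; rewrite /EP.
  + rewrite (EP_iff (fun y z => pat_filter y z uI uJ hq)).
    apply: (pat_map mono); exact: filter_all.
  + rewrite (EP_iff (fun y z => pat_filter y z uJ uI hq')).
    apply: (pat_map mono); exact: filter_all.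
Qed.

Lemma iota_V c k n : 0 < c -> c + k <= n.+1 -> Vkn k n (iota c k).
Proof.
move=> c0 ck; apply: Vkn_intro; [exact: size_iota | exact: iota_ltn_sorted |].
apply/allP => x; rewrite mem_iota; lia.
Qed.

Lemma nc_interval c k n J : 0 < c -> c + k <= n.+1 -> Vkn k n J -> nc' (iota c k) J.
Proof.
move=> c0 ck VJ; have [sz sJ rJ] := VknP VJ.
have uJ := sorted_uniq' sJ; have uC : uniq (iota c k) := iota_uniq c k.
split.
- case=> y [z [/and5P[yJ yC zC zJ yz] int cnt]].
  rewrite !mem_iota in yC zC; rewrite cnt_iota in cnt.
  have : y < c by clear -yC zC yz; lia.
  move=> yc; move: cnt; have -> : y - c = 0 by lia. by rewrite min0n.
- case=> y [z [/and5P[yC yJ zJ zC yz] int cnt]].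
  rewrite !mem_iota in yC zC; rewrite cnt_iota in cnt.
  have e1 := cnt_split J yz; have e2 := cnt_split (iota c k) yz.
  rewrite !count_uniq_mem // (negbTE yJ) mem_iota yC cnt_iota cnt_iota in e1 e2.
  have ce : count (fun t => y < t < z) J = count (fun t => y < t < z) (iota c k).
    apply: cnt_eq => // t ht; symmetry; exact: int.
  have := cnt_lt_size zJ; rewrite sz.
  clear -e1 e2 ce cnt yC zC yz; lia.
Qed.

Lemma cyc_nowrap k n c : 0 < c -> c + k <= n.+1 -> cyc_vec k n c = iota c k.
Proof.
move=> c0 ck; rewrite /cyc_vec.
have -> : [seq ((c + i).-1 %% n).+1 | i <- iota 0 k] = iota c k.
  rewrite (_ : iota c k = map (addn c) (iota 0 k)); last by rewrite -iotaDl addn0.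
  apply/eq_in_map => i; rewrite mem_iota => hi /=.
  rewrite modn_small; lia.
exact: (sorted_sort leq_trans (iota_sorted c k)).
Qed.

Lemma sorted_iota_cat a p s : sorted ltn s -> all (fun x => a + p <= x) s ->
  sorted ltn (iota a p ++ s).
Proof.
elim: p a => [|p IH] a ss /allP hs; first by [].
rewrite /= path_sortedE; last exact: ltn_trans.
apply/andP; split.
- rewrite all_cat; apply/andP; split.
  + apply/allP => x; rewrite mem_iota; lia.
  + apply/allP => x /hs; lia.
- apply: IH => //; apply/allP => x /hs; lia.
Qed.

Lemma cyc_wrap k n c : 0 < c <= n -> k <= n -> n.+1 < c + k ->
  cyc_vec k n c = iota 1 (c + k - n.+1) ++ iota c (n.+1 - c).
Proof.
move=> hc kn ck; rewrite /cyc_vec.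
set p := n.+1 - c; set r := c + k - n.+1.
have kpr : k = p + r by rewrite /p /r; lia.
have sT : sorted ltn (iota 1 r ++ iota c p).
  apply: sorted_iota_cat; first exact: iota_ltn_sorted.
  apply/allP => x; rewrite mem_iota /r; lia.
have -> : [seq ((c + i).-1 %% n).+1 | i <- iota 0 k] = iota c p ++ iota 1 r.
  rewrite kpr iotaD map_cat; congr cat.
  - rewrite (_ : iota c p = map (addn c) (iota 0 p)); last by rewrite -iotaDl addn0.
    apply/eq_in_map => i; rewrite mem_iota => hi /=.
    rewrite modn_small; rewrite /p in hi; lia.
  - rewrite add0n (_ : iota p r = map (addn p) (iota 0 r)); last by rewrite -iotaDl addn0.
    rewrite (_ : iota 1 r = map (addn 1) (iota 0 r)); last by rewrite -iotaDl addn0.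
    rewrite -map_comp; apply/eq_in_map => i; rewrite mem_iota => hi /=.
    have -> : (c + (p + i)).-1 = n + i by rewrite /p; lia.
    rewrite modnDl modn_small; [lia|rewrite /r in hi; lia].
rewrite -(sorted_sort leq_trans (s := iota 1 r ++ iota c p)).
- apply/perm_sortP; [exact: leq_total | exact: leq_trans | exact: anti_leq |].
  by rewrite perm_catC.
- by move: sT; rewrite ltn_sorted_uniq_leq => /andP[].
Qed.

Lemma cyc_props k n c : 1 <= k -> k <= n - 1 -> 1 <= c <= n ->
  Vkn k n (cyc_vec k n c) /\ (forall I, Vkn k n I -> nc' (cyc_vec k n c) I).
Proof.
move=> k1 kn hc.
case: (leqP (c + k) n.+1) => ck.
- rewrite cyc_nowrap //; last by lia.
  split; first by apply: iota_V; lia.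
  move=> I VI; apply: nc_interval VI; lia.
- rewrite cyc_wrap //; try lia.
  set T := iota 1 (c + k - n.+1) ++ iota c (n.+1 - c).
  have sT : sorted ltn T.
    apply: sorted_iota_cat; first exact: iota_ltn_sorted.
    apply/allP => x; rewrite mem_iota; lia.
  have VT : Vkn k n T.
    apply: Vkn_intro => //.
    + rewrite size_cat !size_iota; lia.
    + apply/allP => x; rewrite mem_cat !mem_iota; lia.
  split => // I VI.
  have cT : compl_vec n T = iota (c + k - n) (n - k).
    apply: (irr_sorted_eq ltn_trans ltnn (compl_sorted _ _) (iota_ltn_sorted _ _)) => x.
    rewrite mem_compl mem_cat !mem_iota; lia.
  have kn' : k <= n by lia.
  have [sz1 _ _] := VknP VT; have [sz2 sI rI] := VknP VI.
  have uT := sorted_uniq' sT; have uI := sorted_uniq' sI.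
  have [_ rT] : size T = k /\ all (fun i => 0 < i <= n) T by case/VknP: VT.
  have key : nc' I T <-> nc' (compl_vec n T) (compl_vec n I).
    apply: nc'_of; rewrite /EP.
    + by rewrite (EP_iff (fun y z => pat_compl y z uT uI rT rI)).
    + by rewrite (EP_iff (fun y z => pat_compl y z uI uT rI rT)).
  apply/nc'C/key.
  rewrite cT; apply: (@nc_interval _ _ n); [clear -ck kn hc; lia|clear -ck kn hc; lia|].
  exact: compl_V.
Qed.

Unset Implicit Arguments.

Theorem proposition1p5 (k n : nat) (hk1 : 1 <= k) (hkn : k <= n - 1) :
  (* (i) *)
  complex_iso (Vkn k n) (is_face k n) (Vkn k n) (is_face k n) (reflect_vec n) /\
  (* (ii) *)
  (complex_iso (Vkn k n) (is_face k n) (Vkn (n - k) n) (is_face (n - k) n)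
               (compl_vec n) /\
   forall I J, Vkn k n I -> Vkn k n J ->
     noncrossing I J = noncrossing (compl_vec n I) (compl_vec n J)) /\
  (* (iii) *)
  (forall I J, Vkn k n I -> Vkn k n J -> I <> J ->
     let m := size (setminus_vec I J) in
     let S := symdiff_vec I J in
     [/\ size (setminus_vec J I) = m,
         Vkn m (2 * m) (relabel S (setminus_vec I J)),
         Vkn m (2 * m) (relabel S (setminus_vec J I))
       & noncrossing I J =
         noncrossing (relabel S (setminus_vec I J))
                     (relabel S (setminus_vec J I))]) /\
  (* (iv) *)
  (forall b, 1 <= b <= n ->
     complex_iso [pred I | Vkn k n I && (b \in I)] (is_face k n)
                 (Vkn (k - 1) (n - 1)) (is_face (k - 1) (n - 1)) (delete_vec b) /\
     complex_iso [pred I | Vkn k n I && (b \notin I)] (is_face k n)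
                 (Vkn k (n - 1)) (is_face k (n - 1)) (delete_vec b)) /\
  (* (v) *)
  (forall c, 1 <= c <= n ->
     Vkn k n (cyc_vec k n c) /\
     (forall I, Vkn k n I -> noncrossing (cyc_vec k n c) I) /\
     (forall F, is_max_face k n F -> cyc_vec k n c \in F)).
Proof.
split; first exact: part1.
split; first exact: part2.
split; first by move=> I J VI VJ _; exact: (part3 VI VJ).
split.
- move=> b hb; split.
  + apply: (iso_ext _ (@part4 k (k - 1) n b true hb _)); last by rewrite /=; lia.
    by move=> I; rewrite /= eqb_id.
  + apply: (iso_ext _ (@part4 k k n b false hb _)); last by rewrite addn0.
    by move=> I; rewrite /= eqbF_neg.
- move=> c hc; have [V ncC] := cyc_props hk1 hkn hc.
  set C := cyc_vec k n c in V ncC *.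
  have ncX : forall I, Vkn k n I -> noncrossing C I && noncrossing I C.
    move=> I VI; have [sz sI rI] := VknP VI; have [sz' sC rC] := VknP V.
    have e : size C = size I by rewrite sz sz'.
    apply/andP; split; apply/ncP => //; first exact: ncC.
    apply/nc'C; exact: ncC.
  split => //; split.
  + by move=> I /ncX /andP[].
  + move=> F [faceF maxF].
    case/andP: faceF => /allP VF /allP NF.
    apply: (maxF (C :: F)); last by rewrite mem_head.
    * apply/andP; split.
      - apply/allP => I; rewrite in_cons => /orP[/eqP -> // | /VF //].
      - apply/allP => I hI; apply/allP => J hJ.
        move: hI hJ; rewrite !in_cons => /orP[/eqP -> | IF] /orP[/eqP -> | JF].
        + by case/andP: (ncX C V).
        + by case/andP: (ncX J (VF J JF)).
        + by case/andP: (ncX I (VF I IF)).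
        + by move/allP: (NF I IF) => /(_ J JF).
    * by move=> x xF; rewrite in_cons xF orbT.
Qed.
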